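(* Let $(\mathsf X_1,\mathsf X_2)\sim p(x_1,x_2)$ be a pair of random variables on finite alphabets and let \[ M_1=\max_{\mathsf X_1-\mathsf U-\mathsf X_2}\tfrac12\min\{H(\mathsf X_1|\mathsf U),H(\mathsf X_2|\mathsf U)\}, \] the maximum being over auxiliary random variables $\mathsf U$ (given by $p(u|x_1,x_2)$) such that $\mathsf X_1-\mathsf U-\mathsf X_2$ is a Markov chain. Then for every $M\in[0,M_1]\cup[H(\mathsf X_1,\mathsf X_2)-2M_1,\,H(\mathsf X_1,\mathsf X_2)]$ we have $R^{LB}_{GW}(M)=R^{LB}(M)$, where \[ R^{LB}(M)=\inf\Big\{R:\; R\ge H(\mathsf X_1,\mathsf X_2)-2M,\; R\ge \tfrac12\big(H(\mathsf X_1,\mathsf X_2)-M\big),\; R\ge \tfrac12\big(H(\mathsf X_1,\mathsf X_2)+\max\{H(\mathsf X_1),H(\mathsf X_2)\}\big)-M\Big\}, \] and $R^{LB}_{GW}(M)=\inf_{\mathsf U}R^{LB}_{GW}(M,\mathsf U)$, the infimum over all conditional pmfs $p(u|x_1,x_2)$ with $|\mathcal U|\le|\mathcal X_1|\cdot|\mathcal X_2|+2$, with \[ \begin{aligned} R^{LB}_{GW}(M,\mathsf U)=\inf\Big\{R:\;& R\ge I(\mathsf X_1,\mathsf X_2;\mathsf U)+H(\mathsf X_1|\mathsf U)+H(\mathsf X_2|\mathsf U)-2M,\\ & R\ge \tfrac12\big(I(\mathsf X_1,\mathsf X_2;\mathsf U)+H(\mathsf X_1|\mathsf U)+H(\mathsf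 X_2|\mathsf U)-M\big),\\ & R\ge I(\mathsf X_1,\mathsf X_2;\mathsf U)+H(\mathsf X_1|\mathsf U)+\tfrac12H(\mathsf X_2|\mathsf U)-M,\\ & R\ge I(\mathsf X_1,\mathsf X_2;\mathsf U)+\tfrac12H(\mathsf X_1|\mathsf U)+H(\mathsf X_2|\mathsf U)-M\Big\}. \end{aligned} \]
   Context: $R^{LB}(M)$ is a lower bound on the optimal peak rate-memory function of a two-receiver, two-file broadcast caching network with files generated by the 2-DMS $(\mathsf X_1,\mathsf X_2)$ and per-receiver (normalized) cache capacity $M$, and $R^{LB}_{GW}(M)$ is a lower bound on the corresponding function restricted to Gray-Wyner based two-step schemes; for the statement only their explicit formulas above matter. Entropies and mutual information are the standard Shannon quantities. *)

(* Defs.v *)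
From HB Require Import structures.
From mathcomp Require Import all_boot all_order all_algebra.
From mathcomp Require Import all_classical all_reals all_analysis.
Set Implicit Arguments. Unset Strict Implicit. Unset Printing Implicit Defensive.
Import Order.TTheory GRing.Theory Num.Theory.
Local Open Scope ring_scope.
Local Open Scope classical_set_scope.

Section Info.
Variable R : realType.

(* base-2 logarithm; ln 0 = 0 so 0 * log2 0 = 0 *)
Definition log2 (x : R) : R := ln x / ln 2.

Definition Hent (T : finType) (f : T -> R) : R := - \sum_(t : T) f t * log2 (f t).

Definition is_pmf2 (X1 X2 : finType) (p : X1 -> X2 -> R) : Prop :=
  (forall x1 x2, 0 <= p x1 x2) /\ \sum_(x1 : X1) \sum_(x2 : X2) p x1 x2 = 1.

Definition is_cond_pmf (X1 X2 U : finType) (q : X1 -> X2 -> U -> R) : Prop :=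
  (forall x1 x2 u, 0 <= q x1 x2 u) /\ (forall x1 x2, \sum_(u : U) q x1 x2 u = 1).

Variables (X1 X2 U : finType) (p : X1 -> X2 -> R) (q : X1 -> X2 -> U -> R).

Definition P12U (x1 : X1) (x2 : X2) (u : U) : R := p x1 x2 * q x1 x2 u.
Definition P1U (x1 : X1) (u : U) : R := \sum_(x2 : X2) P12U x1 x2 u.
Definition P2U (x2 : X2) (u : U) : R := \sum_(x1 : X1) P12U x1 x2 u.
Definition PU (u : U) : R := \sum_(x1 : X1) \sum_(x2 : X2) P12U x1 x2 u.
Definition P1 (x1 : X1) : R := \sum_(x2 : X2) p x1 x2.
Definition P2 (x2 : X2) : R := \sum_(x1 : X1) p x1 x2.

Definition H12 : R := Hent (fun x : X1 * X2 => p x.1 x.2).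
Definition H1 : R := Hent P1.
Definition H2 : R := Hent P2.
Definition HU : R := Hent PU.
Definition H1U : R := Hent (fun x : X1 * U => P1U x.1 x.2).
Definition H2U : R := Hent (fun x : X2 * U => P2U x.1 x.2).
Definition H12U : R := Hent (fun x : X1 * X2 * U => P12U x.1.1 x.1.2 x.2).
Definition H1_U : R := H1U - HU.
Definition H2_U : R := H2U - HU.
Definition I12_U : R := H12 + HU - H12U.

Definition markov_1U2 : Prop :=
  forall x1 x2 u, P12U x1 x2 u * PU u = P1U x1 u * P2U x2 u.

Definition RLBGW_U (M : R) : R :=
  inf [set r : R |
    [/\ r >= I12_U + H1_U + H2_U - 2 * M,
        r >= (I12_U + H1_U + H2_U - M) / 2,
        r >= I12_U + H1_U + H2_U / 2 - M &
        r >= I12_U + H1_U / 2 + H2_U - M]].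
End Info.

Arguments H12 {R X1 X2}.
Arguments H1 {R X1 X2}.
Arguments H2 {R X1 X2}.

(* M_1 = max over U with X1 - U - X2 of (1/2) min{H(X1|U), H(X2|U)}
   (formalized as the supremum, over all finite alphabets U and all
   conditional pmfs p(u|x1,x2) making X1 - U - X2 Markov) *)
Definition M1 (R : realType) (X1 X2 : finType) (p : X1 -> X2 -> R) : R :=
  sup [set v : R | exists (U : finType) (q : X1 -> X2 -> U -> R),
         [/\ is_cond_pmf q, markov_1U2 p q &
             v = Num.min (H1_U p q) (H2_U p q) / 2]].

Definition RLB (R : realType) (X1 X2 : finType) (p : X1 -> X2 -> R) (M : R) : R :=
  inf [set r : R |
    [/\ r >= H12 p - 2 * M,
        r >= (H12 p - M) / 2 &
        r >= (H12 p + Num.max (H1 p) (H2 p)) / 2 - M]].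

Definition RLBGW (R : realType) (X1 X2 : finType) (p : X1 -> X2 -> R) (M : R) : R :=
  inf [set r : R | exists (U : finType) (q : X1 -> X2 -> U -> R),
         [/\ (#|U| <= #|X1| * #|X2| + 2)%N, is_cond_pmf q &
             r = RLBGW_U p q M]].

(* Main.v *)
Require Import Defs.
From HB Require Import structures.
From mathcomp Require Import all_boot all_order all_algebra.
From mathcomp Require Import all_classical all_reals all_analysis.
From mathcomp Require Import ring lra.
Import Order.TTheory GRing.Theory Num.Theory.
Local Open Scope ring_scope.

Section CMI.
Variables (R : realType) (A B C : finType) (r : A -> B -> C -> R).
Hypothesis r_ge0 : forall a b c, 0 <= r a b c.

Let rAC a c := \sum_b r a b c.
Let rBC b c := \sum_a r a b c.
Let rC c := \sum_a \sum_b r a b c.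

Lemma sum3D (F G : A -> B -> C -> R) :
  \sum_a \sum_b \sum_c F a b c + \sum_a \sum_b \sum_c G a b c =
  \sum_a \sum_b \sum_c (F a b c + G a b c).
Proof.
rewrite -big_split; apply: eq_bigr => a _; rewrite -big_split.
by apply: eq_bigr => b _; rewrite -big_split.
Qed.

Lemma sum3B (F G : A -> B -> C -> R) :
  \sum_a \sum_b \sum_c F a b c - \sum_a \sum_b \sum_c G a b c =
  \sum_a \sum_b \sum_c (F a b c - G a b c).
Proof.
rewrite -sumrB; apply: eq_bigr => a _; rewrite -sumrB.
by apply: eq_bigr => b _; rewrite -sumrB.
Qed.

Lemma sum3_rot (F : A -> B -> C -> R) :
  \sum_a \sum_b \sum_c F a b c = \sum_c \sum_a \sum_b F a b c.
Proof. under eq_bigr do rewrite exchange_big /=. by rewrite exchange_big. Qed.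

Lemma ln_le_sub1 (y : R) : 0 < y -> ln y <= y - 1.
Proof. move=> y0; have := @le_ln1Dx R (y - 1); rewrite (addrC 1) subrK; apply; lra. Qed.

Lemma cmi_expand :
  \sum_a \sum_b \sum_c r a b c * ln (r a b c) + \sum_c rC c * ln (rC c)
       - \sum_a \sum_c rAC a c * ln (rAC a c) - \sum_b \sum_c rBC b c * ln (rBC b c) =
  \sum_a \sum_b \sum_c (r a b c * ln (r a b c) + r a b c * ln (rC c) - r a b c * ln (rAC a c) - r a b c * ln (rBC b c)).
Proof.
have E1 : \sum_c rC c * ln (rC c) = \sum_a \sum_b \sum_c r a b c * ln (rC c).
  have -> : \sum_a \sum_b \sum_c r a b c * ln (rC c) = \sum_c \sum_a \sum_b r a b c * ln (rC c).
    under eq_bigr do rewrite exchange_big /=.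
    by rewrite exchange_big.
  apply: eq_bigr => c _; rewrite /rC mulr_suml.
  by apply: eq_bigr => a _; rewrite mulr_suml.
have E2 : \sum_a \sum_c rAC a c * ln (rAC a c) = \sum_a \sum_b \sum_c r a b c * ln (rAC a c).
  apply: eq_bigr => a _; rewrite exchange_big; apply: eq_bigr => c _.
  by rewrite /rAC mulr_suml.
have E3 : \sum_b \sum_c rBC b c * ln (rBC b c) = \sum_a \sum_b \sum_c r a b c * ln (rBC b c).
  symmetry; rewrite exchange_big; apply: eq_bigr => b _; rewrite exchange_big.
  by apply: eq_bigr => c _; rewrite /rBC mulr_suml.
by rewrite E1 E2 E3 sum3D !sum3B.
Qed.


Lemma cmi_ge0 :
  0 <= \sum_a \sum_b \sum_c r a b c * ln (r a b c) + \sum_c rC c * ln (rC c)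
       - \sum_a \sum_c rAC a c * ln (rAC a c) - \sum_b \sum_c rBC b c * ln (rBC b c).
Proof.
rewrite cmi_expand.
pose T a b c := r a b c - rAC a c * rBC b c / rC c.
have HT : forall a b c, T a b c <= r a b c * ln (r a b c) + r a b c * ln (rC c)
                     - r a b c * ln (rAC a c) - r a b c * ln (rBC b c).
  move=> a b c; rewrite /T.
  have hAC : 0 <= rAC a c by apply: sumr_ge0.
  have hBC : 0 <= rBC b c by apply: sumr_ge0.
  have hC : 0 <= rC c by apply: sumr_ge0 => ? _; apply: sumr_ge0.
  have [r0|rpos] := eqVneq (r a b c) 0.
    rewrite r0 !mul0r sub0r subr0 subr0 addr0 oppr_le0.
    by apply: mulr_ge0; [apply: mulr_ge0|rewrite invr_ge0].
  have rp : 0 < r a b c by rewrite lt0r rpos r_ge0.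
  have leAC : r a b c <= rAC a c.
    by rewrite /rAC (bigD1 b) //= lerDl; apply: sumr_ge0.
  have leBC : r a b c <= rBC b c.
    by rewrite /rBC (bigD1 a) //= lerDl; apply: sumr_ge0.
  have leC : rAC a c <= rC c.
    by rewrite /rC (bigD1 a) //= lerDl; apply: sumr_ge0 => ? _; apply: sumr_ge0.
  have pAC : 0 < rAC a c by lra.
  have pBC : 0 < rBC b c by lra.
  have pC : 0 < rC c by exact: lt_le_trans pAC leC.
  pose y := rAC a c * rBC b c / (r a b c * rC c).
  have yp : 0 < y by rewrite /y divr_gt0 // mulr_gt0.
  have lny : ln y = ln (rAC a c) + ln (rBC b c) - ln (r a b c) - ln (rC c).
    rewrite /y ln_div ?posrE ?mulr_gt0 // !lnM ?posrE //; lra.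
  have := @ln_le_sub1 y yp; rewrite lny => h.
  have -> : rAC a c * rBC b c / rC c = r a b c * y.
    rewrite /y; field; by rewrite ?(gt_eqF pC) ?(gt_eqF rp).
  have := ler_wpM2l (ltW rp) h; lra.
apply: (le_trans _ (ler_sum _ (fun a _ => ler_sum _ (fun b _ => ler_sum _ (fun c _ => HT a b c))))).
rewrite /T.
under eq_bigr do under eq_bigr do rewrite sumrB.
under eq_bigr do rewrite sumrB.
rewrite sumrB subr_ge0.
rewrite !sum3_rot.
apply: ler_sum => c _.
under eq_bigr do rewrite -mulr_suml -mulr_sumr.
rewrite -mulr_suml -mulr_suml.
have -> : \sum_b rBC b c = rC c by rewrite /rC exchange_big.
rewrite -/(rC c).
have [->|nz] := eqVneq (rC c) 0; first by rewrite !mulr0.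
by rewrite -mulrA mulfV // mulr1.
Qed.

Lemma cmi_eq0 : (forall a b c, r a b c * rC c = rAC a c * rBC b c) ->
  \sum_a \sum_b \sum_c r a b c * ln (r a b c) + \sum_c rC c * ln (rC c)
       - \sum_a \sum_c rAC a c * ln (rAC a c) - \sum_b \sum_c rBC b c * ln (rBC b c) = 0.
Proof.
move=> hM; rewrite cmi_expand; apply: big1 => a _; apply: big1 => b _; apply: big1 => c _.
have [->|rpos] := eqVneq (r a b c) 0; first by rewrite !mul0r !subr0 addr0.
have rp : 0 < r a b c by rewrite lt0r rpos r_ge0.
have leAC : r a b c <= rAC a c.
  by rewrite /rAC (bigD1 b) //= lerDl; apply: sumr_ge0.
have leBC : r a b c <= rBC b c.
  by rewrite /rBC (bigD1 a) //= lerDl; apply: sumr_ge0.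
have leC : rAC a c <= rC c.
  by rewrite /rC (bigD1 a) //= lerDl; apply: sumr_ge0 => ? _; apply: sumr_ge0.
have pAC : 0 < rAC a c by exact: lt_le_trans rp leAC.
have pBC : 0 < rBC b c by exact: lt_le_trans rp leBC.
have pC : 0 < rC c by exact: lt_le_trans pAC leC.
have := congr1 (@ln R) (hM a b c); rewrite !lnM ?posrE // => h.
rewrite -!mulrDr -!mulrBr; apply/eqP; rewrite mulf_eq0; apply/orP; right.
apply/eqP; lra.
Qed.

Lemma cmi_ge0' (rAC' : A -> C -> R) (rBC' : B -> C -> R) (rC' : C -> R) :
  (forall a c, \sum_b r a b c = rAC' a c) ->
  (forall b c, \sum_a r a b c = rBC' b c) ->
  (forall c, \sum_a \sum_b r a b c = rC' c) ->
  0 <= \sum_a \sum_b \sum_c r a b c * ln (r a b c) + \sum_c rC' c * ln (rC' c)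
       - \sum_a \sum_c rAC' a c * ln (rAC' a c) - \sum_b \sum_c rBC' b c * ln (rBC' b c).
Proof.
move=> e1 e2 e3.
have -> : rAC' = rAC by apply/funext => a; apply/funext => c; rewrite -e1.
have -> : rBC' = rBC by apply/funext => b; apply/funext => c; rewrite -e2.
have -> : rC' = rC by apply/funext => c; rewrite -e3.
exact: cmi_ge0.
Qed.

Lemma cmi_eq0' (rAC' : A -> C -> R) (rBC' : B -> C -> R) (rC' : C -> R) :
  (forall a c, \sum_b r a b c = rAC' a c) ->
  (forall b c, \sum_a r a b c = rBC' b c) ->
  (forall c, \sum_a \sum_b r a b c = rC' c) ->
  (forall a b c, r a b c * rC' c = rAC' a c * rBC' b c) ->
  \sum_a \sum_b \sum_c r a b c * ln (r a b c) + \sum_c rC' c * ln (rC' c)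
       - \sum_a \sum_c rAC' a c * ln (rAC' a c) - \sum_b \sum_c rBC' b c * ln (rBC' b c) = 0.
Proof.
move=> e1 e2 e3.
have -> : rAC' = rAC by apply/funext => a; apply/funext => c; rewrite -e1.
have -> : rBC' = rBC by apply/funext => b; apply/funext => c; rewrite -e2.
have -> : rC' = rC by apply/funext => c; rewrite -e3.
exact: cmi_eq0.
Qed.
End CMI.

Section Cara.
Variables (R : realType) (U K : finType) (f : U -> K -> R).

Lemma lin_dep (S : {set U}) : (#|K| < #|S|)%N ->
  exists c : U -> R, [/\ forall u, u \notin S -> c u = 0,
     exists u, c u != 0 & forall k, \sum_u c u * f u k = 0].
Proof.
move=> hS.
pose A : 'M[R]_(#|S|, #|K|) := \matrix_(i, j) f (enum_val i) (enum_val j).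
have hker : kermx A != 0.
  rewrite -mxrank_eq0 mxrank_ker subn_eq0 -ltnNge.
  exact: leq_ltn_trans (rank_leq_col A) hS.
have [i [j hij]] : exists i j, kermx A i j != 0.
  case/boolP: [exists i, exists j, kermx A i j != 0] => [/existsP[i /existsP[j hij]]|/existsPn H].
    by exists i, j.
  suff: kermx A == 0 by rewrite (negbTE hker).
  apply/eqP/matrixP => i j; rewrite [RHS]mxE.
  by have := H i; move/existsPn/(_ j)/negPn/eqP.
pose v := row i (kermx A).
have hv : v *m A = 0 by rewrite /v -row_mul mulmx_ker row0.
exists (fun u => \sum_(l | enum_val l == u) v 0 l); split.
- move=> u uS; apply: big1 => l /eqP el; exfalso; move: uS; rewrite -el.
  by rewrite enum_valP.
- exists (enum_val j).
  rewrite (big_pred1 j); first by rewrite /v mxE.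
  by move=> l /=; rewrite (inj_eq enum_val_inj).
- move=> k.
  have := congr1 (fun M : 'rV_#|K| => M 0 (enum_rank k)) hv.
  rewrite !mxE => e; rewrite -[X in _ = X]e.
  under eq_bigr do rewrite mulr_suml.
  rewrite (exchange_big_dep xpredT) //=.
  apply: eq_bigr => l _; rewrite (big_pred1 (enum_val l)); last by move=> u; rewrite /= eq_sym.
  by rewrite !mxE enum_rankK.
Qed.

Lemma caratheodory (w : U -> R) : (forall u, 0 <= w u) ->
  exists w' : U -> R, [/\ forall u, (0 <= w' u)%R,
    forall k, \sum_u w' u * f u k = \sum_u w u * f u k &
    (#|[set u | w' u != 0%R]| <= #|K|)%N].
Proof.
move=> w0.
suff: forall n (w : U -> R), (forall u, 0 <= w u) -> (#|[set u | w u != 0%R]| <= n)%N ->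
  exists w' : U -> R, [/\ forall u, (0 <= w' u)%R,
    forall k, \sum_u w' u * f u k = \sum_u w u * f u k &
    (#|[set u | w' u != 0%R]| <= #|K|)%N].
  by move=> /(_ _ w w0 (leqnn _)).
elim=> [|n IH] {}w {}w0 hn.
  by exists w; split => //; apply: leq_trans hn _.
have [small|big] := leqP #|[set u | w u != 0]| #|K|; first by exists w.
have [c [cS [u1 cu1] cf]] := @lin_dep [set u | w u != 0] big.
have [c' [c'S [u0 cu0] c'f]] : exists c' : U -> R, [/\ forall u, w u = 0 -> c' u = 0,
    exists u, 0 < c' u & forall k, \sum_u c' u * f u k = 0].
  have cS' : forall u, w u = 0 -> c u = 0.
    by move=> u wu; apply: cS; rewrite inE wu eqxx.
  have [pos|neg] := ltP 0 (c u1).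
    by exists c; split => //; exists u1.
  exists (fun u => - c u); split.
  - by move=> u /cS' ->; rewrite oppr0.
  - by exists u1; rewrite oppr_gt0 lt_neqAle cu1 neg.
  - by move=> k; under eq_bigr do rewrite mulNr; rewrite sumrN cf oppr0.
pose um := [arg min_(u < u0 | 0 < c' u) (w u / c' u)]%O.
have [um_pos um_min] : 0 < c' um /\ forall u, 0 < c' u -> w um / c' um <= w u / c' u.
  by rewrite /um; case: arg_minP => // x hx hmin; split.
pose t := w um / c' um.
have t0 : 0 <= t by rewrite /t divr_ge0 // ltW.
pose w2 u := w u - t * c' u.
have w20 : forall u, 0 <= w2 u.
  move=> u; rewrite /w2 subr_ge0.
  have [cp|cn] := ltP 0 (c' u).
    by rewrite -ler_pdivlMr // um_min.
  apply: le_trans (w0 u); exact: mulr_ge0_le0.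
have w2f : forall k, \sum_u w2 u * f u k = \sum_u w u * f u k.
  move=> k; rewrite /w2.
  under eq_bigr do rewrite mulrBl -mulrA.
  by rewrite sumrB -mulr_sumr c'f mulr0 subr0.
have hsub : [set u | w2 u != 0] \proper [set u | w u != 0].
  apply/properP; split.
    apply/fintype.subsetP => u; rewrite !inE; apply: contra => /eqP wu.
    by rewrite /w2 wu c'S // mulr0 subr0.
  exists um; rewrite !inE.
    by apply/eqP => wu; move: um_pos; rewrite c'S // ltxx.
  by rewrite /w2 /t divfK ?subrr ?eqxx // gt_eqF.
have hn2 : (#|[set u | w2 u != 0%R]| <= n)%N.
  by rewrite -ltnS (leq_trans (proper_card hsub) hn).
have [w' [w'0 w'f w'c]] := IH w2 w20 hn2.
by exists w'; split => // k; rewrite w'f w2f.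
Qed.
End Cara.

Set Implicit Arguments. Unset Strict Implicit.

Definition Lent (R : realType) (T : finType) (f : T -> R) := \sum_t f t * ln (f t).

Lemma ln2_gt0 (R : realType) : 0 < ln (2 : R).
Proof. by apply: ln_gt0; rewrite ltr1n. Qed.

Lemma HentE (R : realType) (T : finType) (f : T -> R) : Hent f = - Lent f / ln 2.
Proof.
rewrite /Hent /Lent /log2 mulNr; congr (- _); rewrite mulr_suml.
by apply: eq_bigr => t _; rewrite mulrA.
Qed.

Lemma Lent2 (R : realType) (A B : finType) (g : A -> B -> R) :
  Lent (fun x : A * B => g x.1 x.2) = \sum_a \sum_b g a b * ln (g a b).
Proof. by rewrite /Lent -(pair_bigA _ (fun a b => g a b * ln (g a b))). Qed.

Lemma Lent3 (R : realType) (A B C : finType) (g : A -> B -> C -> R) :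
  Lent (fun x : A * B * C => g x.1.1 x.1.2 x.2) =
  \sum_a \sum_b \sum_c g a b c * ln (g a b c).
Proof.
rewrite /Lent -(pair_bigA _ (fun ab c => g ab.1 ab.2 c * ln (g ab.1 ab.2 c))) /=.
by rewrite -(pair_bigA _ (fun a b => \sum_c g a b c * ln (g a b c))).
Qed.

Section Ent.
Variables (R : realType) (X1 X2 U : finType) (p : X1 -> X2 -> R) (q : X1 -> X2 -> U -> R).
Hypothesis p0 : forall x1 x2, 0 <= p x1 x2.
Hypothesis hq : is_cond_pmf q.

Let L12 := \sum_x1 \sum_x2 p x1 x2 * ln (p x1 x2).
Let L1 := \sum_x1 P1 p x1 * ln (P1 p x1).
Let L2 := \sum_x2 P2 p x2 * ln (P2 p x2).
Let LU := \sum_u PU p q u * ln (PU p q u).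
Let L1U := \sum_x1 \sum_u P1U p q x1 u * ln (P1U p q x1 u).
Let L2U := \sum_x2 \sum_u P2U p q x2 u * ln (P2U p q x2 u).
Let L12U := \sum_x1 \sum_x2 \sum_u P12U p q x1 x2 u * ln (P12U p q x1 x2 u).

Lemma H12E : H12 p = - L12 / ln 2.
Proof. by rewrite /H12 HentE Lent2. Qed.
Lemma H1E : H1 p = - L1 / ln 2.
Proof. by rewrite /H1 HentE. Qed.
Lemma H2E : H2 p = - L2 / ln 2.
Proof. by rewrite /H2 HentE. Qed.
Lemma HUE : HU p q = - LU / ln 2.
Proof. by rewrite /HU HentE. Qed.
Lemma H1UE : H1U p q = - L1U / ln 2.
Proof. by rewrite /H1U HentE Lent2. Qed.
Lemma H2UE : H2U p q = - L2U / ln 2.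
Proof. by rewrite /H2U HentE Lent2. Qed.
Lemma H12UE : H12U p q = - L12U / ln 2.
Proof. by rewrite /H12U HentE Lent3. Qed.

Lemma P12U_ge0 x1 x2 u : 0 <= P12U p q x1 x2 u.
Proof. by rewrite /P12U mulr_ge0 //; case: hq. Qed.

Lemma sumq x1 x2 : \sum_u P12U p q x1 x2 u = p x1 x2.
Proof. by rewrite /P12U -mulr_sumr; case: hq => _ ->; rewrite mulr1. Qed.

Lemma ineq_a : 0 <= L12U + LU - L1U - L2U.
Proof. by apply: cmi_ge0' => //; exact: P12U_ge0. Qed.

Lemma ineq_b : 0 <= L12U + L1 - L12 - L1U.
Proof.
have := @cmi_ge0' R X2 U X1 (fun a b c => P12U p q c a b) (fun a b c => P12U_ge0 c a b)
  (fun a c => p c a) (fun b c => P1U p q c b) (P1 p).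
have -> : \sum_a \sum_b \sum_c P12U p q c a b * ln (P12U p q c a b) = L12U.
  by rewrite sum3_rot.
have -> : \sum_a \sum_c p c a * ln (p c a) = L12 by rewrite exchange_big.
have -> : \sum_b \sum_c P1U p q c b * ln (P1U p q c b) = L1U by rewrite exchange_big.
apply.
- by move=> a c; rewrite sumq.
- by [].
- by move=> c; rewrite /P1; apply: eq_bigr => a _; rewrite sumq.
Qed.

Lemma ineq_c : 0 <= L12U + L2 - L12 - L2U.
Proof.
have := @cmi_ge0' R X1 U X2 (fun a b c => P12U p q a c b) (fun a b c => P12U_ge0 a c b)
  (fun a c => p a c) (fun b c => P2U p q c b) (P2 p).
have -> : \sum_a \sum_b \sum_c P12U p q a c b * ln (P12U p q a c b) = L12U.
  by rewrite /L12U; apply: eq_bigr => a _; rewrite exchange_big.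
have -> : \sum_b \sum_c P2U p q c b * ln (P2U p q c b) = L2U by rewrite exchange_big.
apply.
- by move=> a c; rewrite sumq.
- by [].
- by move=> c; rewrite /P2; apply: eq_bigr => a _; rewrite sumq.
Qed.

Lemma sum_unit (F : unit -> R) : \sum_(c : unit) F c = F tt.
Proof. by rewrite (big_pred1 tt) // => c; case: c. Qed.

Lemma sumP : \sum_x1 \sum_x2 p x1 x2 = 1 -> \sum_x1 \sum_u P1U p q x1 u = 1.
Proof.
move=> h; rewrite -h; apply: eq_bigr => x1 _; rewrite /P1U exchange_big.
by apply: eq_bigr => x2 _; rewrite sumq.
Qed.

Lemma ineq_d : \sum_x1 \sum_x2 p x1 x2 = 1 -> 0 <= L1U - L1 - LU.
Proof.
move=> h1.
have e1 : forall a (_ : unit), \sum_b P1U p q a b = P1 p a.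
  by move=> a _; rewrite /P1U /P1 exchange_big; apply: eq_bigr => x2 _; rewrite sumq.
have e2 : forall b (_ : unit), \sum_a P1U p q a b = PU p q b by [].
have e3 : forall (_ : unit), \sum_a \sum_b P1U p q a b = 1 by move=> _; rewrite sumP.
have H := @cmi_ge0' R X1 U unit (fun a b _ => P1U p q a b)
  (fun a b _ => sumr_ge0 _ (fun x2 _ => P12U_ge0 a x2 b))
  (fun a _ => P1 p a) (fun b _ => PU p q b) (fun _ => 1) e1 e2 e3.
move: H.
have -> : \sum_a \sum_b \sum_(c : unit) P1U p q a b * ln (P1U p q a b) = L1U.
  by apply: eq_bigr => a _; apply: eq_bigr => b _; rewrite sum_unit.
have -> : \sum_(c : unit) 1 * ln (1 : R) = 0 by rewrite sum_unit ln1 mulr0.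
have -> : \sum_a \sum_(c : unit) P1 p a * ln (P1 p a) = L1.
  by apply: eq_bigr => a _; rewrite sum_unit.
have -> : \sum_b \sum_(c : unit) PU p q b * ln (PU p q b) = LU.
  by apply: eq_bigr => a _; rewrite sum_unit.
by rewrite addr0.
Qed.

Lemma markov_a : markov_1U2 p q -> L12U + LU - L1U - L2U = 0.
Proof.
move=> hM; apply: cmi_eq0' => //; exact: P12U_ge0.
Qed.
End Ent.

Lemma div4 (R : realType) (a b c d l : R) : 0 < l -> 0 <= a + b - c - d ->
  0 <= - c / l + - d / l - - b / l - - a / l.
Proof.
move=> l0 h.
have -> : - c / l + - d / l - - b / l - - a / l = (a + b - c - d) / l by ring.
by rewrite divr_ge0 // ltW.
Qed.

Lemma div4eq (R : realType) (a b c d l : R) : a + b - c - d = 0 ->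
  - c / l + - d / l - - b / l - - a / l = 0.
Proof.
move=> h.
have -> : - c / l + - d / l - - b / l - - a / l = (a + b - c - d) / l by ring.
by rewrite h mul0r.
Qed.

Lemma div3 (R : realType) (a b c l : R) : 0 < l -> 0 <= a - b - c ->
  - a / l - - c / l <= - b / l.
Proof.
move=> l0 h; rewrite -subr_ge0.
have -> : - b / l - (- a / l - - c / l) = (a - b - c) / l by ring.
by rewrite divr_ge0 // ltW.
Qed.

Section EntH.
Variables (R : realType) (X1 X2 U : finType) (p : X1 -> X2 -> R) (q : X1 -> X2 -> U -> R).
Hypothesis p0 : forall x1 x2, 0 <= p x1 x2.
Hypothesis hq : is_cond_pmf q.

Lemma Hineq_a : 0 <= H1U p q + H2U p q - HU p q - H12U p q.
Proof.
rewrite H1UE H2UE HUE H12UE; exact: div4 (ln2_gt0 R) (ineq_a p0 hq).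
Qed.

Lemma Hineq_b : 0 <= H12 p + H1U p q - H1 p - H12U p q.
Proof.
rewrite H1UE H12E H1E H12UE; exact: div4 (ln2_gt0 R) (ineq_b p0 hq).
Qed.

Lemma Hineq_c : 0 <= H12 p + H2U p q - H2 p - H12U p q.
Proof.
rewrite H2UE H12E H2E H12UE; exact: div4 (ln2_gt0 R) (ineq_c p0 hq).
Qed.

Lemma Hineq_d : \sum_x1 \sum_x2 p x1 x2 = 1 -> H1U p q - HU p q <= H1 p.
Proof.
move=> h1; rewrite H1UE HUE H1E; exact: div3 (ln2_gt0 R) (ineq_d p0 hq h1).
Qed.

Lemma Hmarkov : markov_1U2 p q -> H1U p q + H2U p q - HU p q - H12U p q = 0.
Proof.
move=> hM; rewrite H1UE H2UE HUE H12UE; exact: div4eq (markov_a p0 hq hM).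
Qed.
End EntH.

Lemma ln_mul_split (R : realType) (w a : R) : 0 <= w -> 0 <= a ->
  w * a * ln (w * a) = a * (w * ln w) + w * (a * ln a).
Proof.
move=> w0 a0.
have [->|wn] := eqVneq w 0; first by rewrite !(mul0r, mulr0, addr0).
have [->|an] := eqVneq a 0; first by rewrite !(mul0r, mulr0, addr0).
have wp : 0 < w by rewrite lt0r wn.
have ap : 0 < a by rewrite lt0r an.
rewrite lnM ?posrE //; ring.
Qed.

Section Fact.
Variables (R : realType) (X1 X2 U : finType) (p : X1 -> X2 -> R) (q : X1 -> X2 -> U -> R).
Variables (w : U -> R) (a : U -> X1 -> R) (b : U -> X2 -> R).
Hypothesis w0 : forall u, 0 <= w u.
Hypothesis a0 : forall u x, 0 <= a u x.
Hypothesis b0 : forall u x, 0 <= b u x.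
Hypothesis a1 : forall u, \sum_x a u x = 1.
Hypothesis b1 : forall u, \sum_x b u x = 1.
Hypothesis hf : forall x1 x2 u, P12U p q x1 x2 u = w u * a u x1 * b u x2.

Lemma fact_P1U x1 u : P1U p q x1 u = w u * a u x1.
Proof. by rewrite /P1U; under eq_bigr do rewrite hf; rewrite -mulr_sumr b1 mulr1. Qed.

Lemma fact_P2U x2 u : P2U p q x2 u = w u * b u x2.
Proof.
rewrite /P2U; under eq_bigr do rewrite hf.
by rewrite -mulr_suml -mulr_sumr a1 mulr1.
Qed.

Lemma fact_PU u : PU p q u = w u.
Proof.
rewrite /PU; under eq_bigr do rewrite -/(P1U p q _ u) fact_P1U.
by rewrite -mulr_sumr a1 mulr1.
Qed.

Lemma fact_markov : markov_1U2 p q.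
Proof. by move=> x1 x2 u; rewrite hf fact_PU fact_P1U fact_P2U; ring. Qed.

Lemma fact_H1 : H1_U p q = \sum_u w u * Hent (a u).
Proof.
rewrite /H1_U H1UE HUE.
have key : \sum_x1 \sum_u P1U p q x1 u * ln (P1U p q x1 u) =
    \sum_u (w u * ln (w u)) + \sum_u w u * Lent (a u).
  rewrite exchange_big -big_split; apply: eq_bigr => u _ /=.
  under eq_bigr do rewrite fact_P1U ln_mul_split //.
  by rewrite big_split /= -mulr_suml a1 mul1r -mulr_sumr.
rewrite key.
have -> : \sum_u PU p q u * ln (PU p q u) = \sum_u w u * ln (w u).
  by apply: eq_bigr => u _; rewrite fact_PU.
under [RHS]eq_bigr do rewrite HentE.
have -> : \sum_u w u * (- Lent (a u) / ln 2) = - (\sum_u w u * Lent (a u)) / ln 2.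
  rewrite mulNr mulr_suml -sumrN; apply: eq_bigr => u _; ring.
ring.
Qed.

Lemma fact_H2 : H2_U p q = \sum_u w u * Hent (b u).
Proof.
rewrite /H2_U H2UE HUE.
have key : \sum_x2 \sum_u P2U p q x2 u * ln (P2U p q x2 u) =
    \sum_u (w u * ln (w u)) + \sum_u w u * Lent (b u).
  rewrite exchange_big -big_split; apply: eq_bigr => u _ /=.
  under eq_bigr do rewrite fact_P2U ln_mul_split //.
  by rewrite big_split /= -mulr_suml b1 mul1r -mulr_sumr.
rewrite key.
have -> : \sum_u PU p q u * ln (PU p q u) = \sum_u w u * ln (w u).
  by apply: eq_bigr => u _; rewrite fact_PU.
under [RHS]eq_bigr do rewrite HentE.
have -> : \sum_u w u * (- Lent (b u) / ln 2) = - (\sum_u w u * Lent (b u)) / ln 2.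
  rewrite mulNr mulr_suml -sumrN; apply: eq_bigr => u _; ring.
ring.
Qed.
End Fact.

Lemma le_sum2 (R : realType) (I J : finType) (F : I -> J -> R) i j :
  (forall i j, 0 <= F i j) -> F i j <= \sum_i \sum_j F i j.
Proof.
move=> F0; rewrite (bigD1 i) //= (bigD1 j) //= -addrA lerDl.
apply: addr_ge0; first by apply: sumr_ge0.
by apply: sumr_ge0 => i' _; apply: sumr_ge0.
Qed.

Section Reduce.
Variables (R : realType) (X1 X2 U : finType) (p : X1 -> X2 -> R) (q : X1 -> X2 -> U -> R).
Hypothesis hp : is_pmf2 p.
Hypothesis hq : is_cond_pmf q.
Hypothesis hM : markov_1U2 p q.

Let p0 : forall x1 x2, 0 <= p x1 x2. Proof. by case: hp. Qed.
Let p1 : \sum_x1 \sum_x2 p x1 x2 = 1. Proof. by case: hp. Qed.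

Let w u := PU p q u.
Let a u x1 := if PU p q u == 0 then P1 p x1 else P1U p q x1 u / PU p q u.
Let b u x2 := if PU p q u == 0 then P2 p x2 else P2U p q x2 u / PU p q u.

Let w0 u : 0 <= w u.
Proof. by apply: sumr_ge0 => x1 _; apply: sumr_ge0 => x2 _; exact: P12U_ge0. Qed.
Let a0 u x : 0 <= a u x.
Proof.
rewrite /a; case: ifP => _; first by apply: sumr_ge0.
by apply: divr_ge0; [apply: sumr_ge0 => x2 _; exact: P12U_ge0|exact: w0].
Qed.
Let b0 u x : 0 <= b u x.
Proof.
rewrite /b; case: ifP => _; first by apply: sumr_ge0.
by apply: divr_ge0; [apply: sumr_ge0 => x2 _; exact: P12U_ge0|exact: w0].
Qed.
Let a1 u : \sum_x a u x = 1.
Proof.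
have [h|h] := eqVneq (PU p q u) 0.
  by under eq_bigr do rewrite /a h eqxx; rewrite -p1.
under eq_bigr do rewrite /a (negbTE h).
by rewrite -mulr_suml mulfV.
Qed.
Let b1 u : \sum_x b u x = 1.
Proof.
have [h|h] := eqVneq (PU p q u) 0.
  by under eq_bigr do rewrite /b h eqxx; rewrite -p1 /P2 exchange_big.
under eq_bigr do rewrite /b (negbTE h).
rewrite -mulr_suml /P2U exchange_big /=.
by rewrite -/(PU p q u) mulfV.
Qed.
Let hf x1 x2 u : P12U p q x1 x2 u = w u * a u x1 * b u x2.
Proof.
rewrite /w /a /b; have [h|h] := eqVneq (PU p q u) 0.
  rewrite h !mul0r; apply/eqP; rewrite eq_le P12U_ge0 // andbT.
  apply: le_trans (@le_sum2 _ _ _ (fun x1 x2 => P12U p q x1 x2 u) x1 x2 (fun i j => P12U_ge0 p0 hq i j u)) _.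
  by move: h; rewrite /PU => ->.
have := hM x1 x2 u => e.
apply: (mulIf h); rewrite e; field; exact: h.
Qed.

Let K := ((X1 * X2) + bool)%type.
Let f u (k : K) : R := match k with
  | inl x => a u x.1 * b u x.2
  | inr true => Hent (a u)
  | inr false => Hent (b u) end.

Lemma reduce : exists (U' : finType) (q' : X1 -> X2 -> U' -> R),
  [/\ (#|U'| <= #|X1| * #|X2| + 2)%N, is_cond_pmf q', markov_1U2 p q',
      H1_U p q' = H1_U p q & H2_U p q' = H2_U p q].
Proof.
have [w' [w'0 w'f w'c]] := @caratheodory R U K f w w0.
have hp12 : forall x1 x2, \sum_u w' u * (a u x1 * b u x2) = p x1 x2.
  move=> x1 x2; have := w'f (inl (x1, x2)); rewrite /= => ->.
  by rewrite -(sumq p hq x1 x2); apply: eq_bigr => u _; rewrite hf mulrA.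
have hH1 : \sum_u w' u * Hent (a u) = H1_U p q.
  have := w'f (inr true); rewrite /= => ->.
  by rewrite (fact_H1 w0 a0 a1 b1 hf).
have hH2 : \sum_u w' u * Hent (b u) = H2_U p q.
  have := w'f (inr false); rewrite /= => ->.
  by rewrite (fact_H2 w0 b0 a1 b1 hf).
pose S := [set u | w' u != 0].
pose U' : finType := {u : U | u \in S}.
have sumS : forall F : U -> R, (forall u, w' u = 0 -> F u = 0) ->
    \sum_(u' : U') F (val u') = \sum_u F u.
  move=> F hF; rewrite -(big_sub S F) [RHS](bigID (mem S)) /=.
  rewrite [X in _ = _ + X]big1 ?addr0 //.
  by move=> u; rewrite inE negbK => /eqP; apply: hF.
have sumw' : \sum_u w' u = 1.
  rewrite -p1; under [RHS]eq_bigr => x1 _ do under eq_bigr => x2 _ do rewrite -hp12.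
  rewrite sum3_rot; apply: eq_bigr => u _.
  rewrite -[LHS]mulr1 -(a1 u) mulr_sumr; apply: eq_bigr => x1 _.
  rewrite -[LHS]mulr1 -(b1 u) mulr_sumr; apply: eq_bigr => x2 _.
  by rewrite mulrA.
have [u0 hu0] : exists u, w' u != 0.
  apply/existsP; apply: contraT; rewrite negb_exists => /forallP H.
  move: sumw'; rewrite big1 => [/eqP|u _]; first by rewrite eq_sym oner_eq0.
  by apply/eqP; rewrite -[_ == _]negbK H.
have cpos : (0 < #|U'|)%N.
  apply/card_gt0P; have hu0' : u0 \in S by rewrite inE.
  by exists (exist _ u0 hu0').
pose q' x1 x2 (u' : U') : R := if p x1 x2 == 0 then (#|U'|%:R)^-1
  else w' (val u') * (a (val u') x1 * b (val u') x2) / p x1 x2.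
have hq' : is_cond_pmf q'.
  split.
    move=> x1 x2 u'; rewrite /q'; case: ifP => _; first by rewrite invr_ge0.
    by rewrite divr_ge0 // mulr_ge0 // mulr_ge0.
  move=> x1 x2; have [h|h] := eqVneq (p x1 x2) 0.
    under eq_bigr do rewrite /q' h eqxx.
    rewrite sumr_const.
    have -> : #|[pred x : U' | true]| = #|U'| by apply: eq_card.
    by rewrite -[LHS]mulr_natr mulVf // pnatr_eq0 -lt0n.
  under eq_bigr do rewrite /q' (negbTE h).
  rewrite -mulr_suml (sumS (fun u => w' u * (a u x1 * b u x2))) ?hp12 ?mulfV // => u ->; by rewrite mul0r.
have hf' : forall x1 x2 (u' : U'), P12U p q' x1 x2 u' =
    w' (val u') * a (val u') x1 * b (val u') x2.
  move=> x1 x2 u'; rewrite /P12U /q'; case: ifPn => h.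
    rewrite (eqP h) mul0r; apply/esym.
    have := hp12 x1 x2; rewrite (eqP h) => /psumr_eq0P H.
    rewrite -mulrA H // => u _; rewrite mulr_ge0 // mulr_ge0 //.
  by rewrite mulrC divfK // mulrA.
have w''0 : forall u' : U', 0 <= w' (val u') by move=> u'; exact: w'0.
have a''0 : forall (u' : U') x, 0 <= a (val u') x by move=> u' x; exact: a0.
have b''0 : forall (u' : U') x, 0 <= b (val u') x by move=> u' x; exact: b0.
have a''1 : forall u' : U', \sum_x a (val u') x = 1 by move=> u'; exact: a1.
have b''1 : forall u' : U', \sum_x b (val u') x = 1 by move=> u'; exact: b1.
exists U', q'; split => //.
- rewrite card_sig; apply: (leq_trans _ (leq_trans w'c _)).
    by apply: subset_leq_card; apply/fintype.subsetP => u; rewrite !inE.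
  by rewrite /K card_sum card_prod card_bool.
- exact: (fact_markov a''1 b''1 hf').
- rewrite (fact_H1 w''0 a''0 a''1 b''1 hf') (sumS (fun u => w' u * Hent (a u))) -?hH1 // => u ->; exact: mul0r.
- rewrite (fact_H2 w''0 b''0 a''1 b''1 hf') (sumS (fun u => w' u * Hent (b u))) -?hH2 // => u ->; exact: mul0r.
Qed.
End Reduce.

Lemma inf_min (R : realType) (E : set R) m : E m -> (forall r, E r -> m <= r) -> inf E = m.
Proof.
move=> Em lb; apply/eqP; rewrite eq_le; apply/andP; split.
  by apply: ge_inf => //; exists m.
by apply: lb_le_inf => //; exists m.
Qed.

Section GW.
Variables (R : realType) (X1 X2 U : finType) (p : X1 -> X2 -> R) (q : X1 -> X2 -> U -> R) (M : R).
Let t1 := I12_U p q + H1_U p q + H2_U p q - 2 * M.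
Let t2 := (I12_U p q + H1_U p q + H2_U p q - M) / 2.
Let t3 := I12_U p q + H1_U p q + H2_U p q / 2 - M.
Let t4 := I12_U p q + H1_U p q / 2 + H2_U p q - M.

Lemma gwE : RLBGW_U p q M = Num.max t1 (Num.max t2 (Num.max t3 t4)).
Proof.
apply: inf_min.
  by rewrite /= !le_max !lexx !orbT.
by move=> r [h1 h2 h3 h4]; rewrite !ge_max h1 h2 h3 h4.
Qed.

Lemma gw_ge : [/\ t1 <= RLBGW_U p q M, t2 <= RLBGW_U p q M,
  t3 <= RLBGW_U p q M & t4 <= RLBGW_U p q M].
Proof. by rewrite gwE; split; rewrite !le_max lexx ?orbT. Qed.

Lemma gw_le r : t1 <= r -> t2 <= r -> t3 <= r -> t4 <= r -> RLBGW_U p q M <= r.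
Proof. by move=> h1 h2 h3 h4; rewrite gwE !ge_max h1 h2 h3 h4. Qed.
End GW.

Section LB.
Variables (R : realType) (X1 X2 : finType) (p : X1 -> X2 -> R) (M : R).
Let s1 := H12 p - 2 * M.
Let s2 := (H12 p - M) / 2.
Let s3 := (H12 p + Num.max (H1 p) (H2 p)) / 2 - M.

Lemma rlbE : RLB p M = Num.max s1 (Num.max s2 s3).
Proof.
apply: inf_min.
  by rewrite /= !le_max !lexx !orbT.
by move=> r [h1 h2 h3]; rewrite !ge_max h1 h2 h3.
Qed.

Lemma rlb_ge : [/\ s1 <= RLB p M, s2 <= RLB p M & s3 <= RLB p M].
Proof. by rewrite rlbE; split; rewrite !le_max lexx ?orbT. Qed.

Lemma rlb_le r : s1 <= r -> s2 <= r -> s3 <= r -> RLB p M <= r.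
Proof. by move=> h1 h2 h3; rewrite rlbE !ge_max h1 h2 h3. Qed.
End LB.

Lemma lb_gw (R : realType) (X1 X2 U : finType) (p : X1 -> X2 -> R) (q : X1 -> X2 -> U -> R) M :
  is_pmf2 p -> is_cond_pmf q -> RLB p M <= RLBGW_U p q M.
Proof.
move=> [p0 p1] hq.
have ha := Hineq_a p0 hq; have hb := Hineq_b p0 hq; have hc := Hineq_c p0 hq.
have [g1 g2 g3 g4] := gw_ge p q M.
move: g1 g2 g3 g4; rewrite /I12_U /H1_U /H2_U => g1 g2 g3 g4.
apply: rlb_le.
- lra.
- lra.
- rewrite maxEle; case: ifP => _; lra.
Qed.

Local Open Scope classical_set_scope.

Lemma sum_ind (R : realType) (T : finType) (t0 : T) (F : T -> R) :
  \sum_t F t * (t0 == t)%:R = F t0.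
Proof.
rewrite (bigD1 t0) //= eqxx mulr1 big1 ?addr0 // => t ht.
by rewrite eq_sym (negbTE ht) mulr0.
Qed.

Theorem theorem3 (R : realType) (X1 X2 : finType) (p : X1 -> X2 -> R)
  (hp : is_pmf2 p) (M : R) :
  (0 <= M <= M1 p \/ H12 p - 2 * M1 p <= M <= H12 p) ->
  RLBGW p M = RLB p M.
Proof.
move=> hreg.
have [p0 p1] := hp.
pose G := [set r : R | exists (U : finType) (q : X1 -> X2 -> U -> R),
         [/\ (#|U| <= #|X1| * #|X2| + 2)%N, is_cond_pmf q & r = RLBGW_U p q M]].
have Gne : G (RLBGW_U p (fun _ _ (_ : unit) => 1) M).
  exists unit, (fun _ _ _ => 1); split => //.
  - by rewrite card_unit addn2.
  - by split => // x1 x2; rewrite sum_unit.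
have Glb : forall r, G r -> RLB p M <= r.
  by move=> r [U [q [_ hq ->]]]; exact: lb_gw.
have hG : RLBGW p M = inf G by [].
apply/eqP; rewrite eq_le; apply/andP; split; last first.
  by rewrite hG; apply: lb_le_inf => //; exists (RLBGW_U p (fun _ _ (_ : unit) => 1) M).
pose S := [set v : R | exists (U : finType) (q : X1 -> X2 -> U -> R),
         [/\ is_cond_pmf q, markov_1U2 p q &
             v = Num.min (H1_U p q) (H2_U p q) / 2]].
have M1E : M1 p = sup S by [].
have Sne : S !=set0.
  pose q0 (x1 : X1) (x2 : X2) (u : X1) : R := (u == x1)%:R.
  have hq0 : is_cond_pmf q0.
    split; first by move=> x1 x2 u; rewrite /q0 ler0n.
    move=> x1 x2; rewrite /q0 (bigD1 x1) //= eqxx big1 ?addr0 // => u hu.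
    by rewrite (negbTE hu).
  exists (Num.min (H1_U p q0) (H2_U p q0) / 2), X1, q0; split => //.
  move=> x1 x2 u.
  have ePU : PU p q0 u = P1 p u.
    rewrite /PU /P1 /P12U /q0.
    under eq_bigr do rewrite -mulr_suml.
    by rewrite (eq_bigr (fun x1 => (\sum_x2 p x1 x2) * (u == x1)%:R)) ?sum_ind // => x1 _; rewrite eq_sym.
  have eP1U : P1U p q0 x1 u = P1 p x1 * (u == x1)%:R.
    by rewrite /P1U /P12U /q0 -mulr_suml.
  have eP2U : P2U p q0 x2 u = p u x2.
    rewrite /P2U /P12U /q0.
    by rewrite (eq_bigr (fun x1 => p x1 x2 * (u == x1)%:R)) ?sum_ind // => x1 _; rewrite eq_sym.
  rewrite ePU eP1U eP2U /P12U /q0.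
  by have [->|_] := eqVneq u x1; rewrite ?mulr1 ?mulr0 ?mul0r // mulrC.
have Sub : ubound S (H1 p / 2).
  move=> v [U [q [hq _ ->]]].
  have := Hineq_d p0 hq p1.
  have : Num.min (H1_U p q) (H2_U p q) <= H1_U p q by rewrite ge_min lexx.
  rewrite /H1_U; lra.
have hS : has_sup S by split => //; exists (H1 p / 2).
apply/ler_addgt0Pr => e e0.
have [v [U [q [hq hM ->]]] hv] := sup_adherent e0 hS.
rewrite -M1E in hv.
have [U' [q' [hc hq' hM' e1 e2]]] := reduce hp hq hM.
have hmin1 : Num.min (H1_U p q) (H2_U p q) <= H1_U p q by rewrite ge_min lexx.
have hmin2 : Num.min (H1_U p q) (H2_U p q) <= H2_U p q by rewrite ge_min lexx orbT.
have hmk := Hmarkov p0 hq' hM'.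
have [r1 r2 _] := rlb_ge p M.
have GU' : G (RLBGW_U p q' M) by exists U', q'.
rewrite hG; apply: le_trans (ge_inf _ GU') _.
  by exists (RLB p M) => r /Glb.
move: e1 e2 hmin1 hmin2 hv; rewrite /H1_U /H2_U => e1 e2 hmin1 hmin2 hv.
apply: gw_le; rewrite /I12_U /H1_U /H2_U; case: hreg => /andP[hA hB]. all: lra.
Qed.
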